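(* A permutation $\pi\in\mathcal{S}_n$ is a Schröder permutation (i.e. avoids both $1243$ and $2143$) if and only if every element $(i,j)$ of its essential set $\mathcal{E}(\pi)$ has rank $\rho(i,j)\le 1$.
   Context: For $\pi=\pi_1\cdots\pi_n\in\mathcal{S}_n$ and $\tau\in\mathcal{S}_k$, $\pi$ contains the pattern $\tau$ if there are indices $i_1<\dots<i_k$ with $\pi_{i_1}\cdots\pi_{i_k}$ in the same relative order as $\tau_1\cdots\tau_k$; otherwise $\pi$ avoids $\tau$. Represent $\pi$ by an $n\times n$ array, rows $i=1,\dots,n$ numbered top to bottom and columns $j=1,\dots,n$ left to right, with a dot in square $(i,\pi_i)$. The diagram $D(\pi)$ is the set of squares $(i,j)$ with $\pi_i>j$ and $\pi^{-1}(j)>i$. The essential set $\mathcal{E}(\pi)$ is the set of squares $(i,j)\in D(\pi)$ such that $(i+1,j)\notin D(\pi)$ and $(i,j+1)\notin D(\pi)$ (squares outside the array count as not in $D(\pi)$). The rank of a square $(i,j)$ is $\rho(i,j)=\#\{k<i:\pi_k<j\}$, the number of dots strictly northwest of it. *)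

(* Defs.v *)
(* Permutations of 'I_n (0-based rows/columns/values;
   all notions are invariant under the uniform shift by 1). *)
From mathcomp Require Import all_boot all_fingroup.
Set Implicit Arguments. Unset Strict Implicit. Unset Printing Implicit Defensive.

Section Perm.
Variable n : nat.
Implicit Types pi : 'S_n.

(* pi contains the pattern tau (given in one-line notation as a sequence of
   distinct numbers, e.g. [:: 1; 2; 4; 3]): there are indices
   i_1 < ... < i_k with pi_{i_1} ... pi_{i_k} in the same relative order. *)
Definition contains_pattern pi (tau : seq nat) : Prop :=
  exists f : 'I_(size tau) -> 'I_n,
    (forall a b : 'I_(size tau), a < b -> f a < f b) /\
    (forall a b : 'I_(size tau),
        (pi (f a) < pi (f b)) = (nth 0 tau a < nth 0 tau b)).

Definition avoids_pattern pi (tau : seq nat) : Prop := ~ contains_pattern pi tau.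

Definition schroeder pi : Prop :=
  avoids_pattern pi [:: 1; 2; 4; 3] /\ avoids_pattern pi [:: 2; 1; 4; 3].

(* (i,j) in the diagram D(pi): pi_i > j and pi^{-1}(j) > i; squares outside
   the array (i or j >= n) are not in D(pi). *)
Definition in_diagram pi (i j : nat) : bool :=
  [exists a : 'I_n, [exists b : 'I_n,
     [&& (a == i :> nat), (b == j :> nat), (b < pi a) & (a < (pi^-1)%g b)]]].

Definition essential pi (i j : 'I_n) : bool :=
  [&& in_diagram pi i j, ~~ in_diagram pi i.+1 j & ~~ in_diagram pi i j.+1].

Definition rank_sq pi (i j : 'I_n) : nat :=
  #|[set k : 'I_n | (k < i) && (pi k < j)]|.

End Perm.

(* Main.v *)
Require Import Defs.
From mathcomp Require Import all_boot all_fingroup.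
From mathcomp Require Import zify.

Lemma in_diagE n (pi : 'S_n) (i j : 'I_n) :
  in_diagram pi i j = (j < pi i) && (i < (pi^-1)%g j).
Proof.
apply/existsP/andP => [[a /existsP [b /and4P [/eqP ha /eqP hb h1 h2]]]|[h1 h2]].
  have -> : i = a by apply: val_inj.
  have -> : j = b by apply: val_inj.
  by [].
by exists i; apply/existsP; exists j; rewrite !eqxx h1 h2.
Qed.

Lemma rank_mono n (pi : 'S_n) (c d i j : 'I_n) :
  c <= i -> d <= j -> rank_sq pi c d <= rank_sq pi i j.
Proof.
move=> ci dj; apply: subset_leq_card; apply/subsetP => k; rewrite !inE.
move=> /andP [h1 h2]; apply/andP; split; lia.
Qed.

Lemma key n (pi : 'S_n) (c d : 'I_n) :
  c < d -> pi d < pi c -> 1 < rank_sq pi c (pi d) ->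
  exists i j, essential pi i j && (1 < rank_sq pi i j).
Proof.
move=> cd dc rk.
pose P := fun p : 'I_n * 'I_n => [&& in_diagram pi p.1 p.2, c <= p.1 & pi d <= p.2].
have P0 : P (c, pi d).
  by rewrite /P /= in_diagE permK dc cd !leqnn.
case: (arg_maxnP (fun p : 'I_n * 'I_n => p.1 + p.2) P0) => [[i j]] /and3P [/= Dij ci dj] Hmax.
exists i, j; apply/andP; split; last by apply: leq_trans rk _; apply: rank_mono.
rewrite /essential Dij /=; apply/andP; split; apply/negP.
  move=> /existsP [a /existsP [b /and4P [/eqP ha /eqP hb h1 h2]]].
  have hj : b = j by apply: val_inj.
  subst b.
  have := Hmax (a, j); rewrite /P /= in_diagE h1 h2 /=; lia.
move=> /existsP [a /existsP [b /and4P [/eqP ha /eqP hb h1 h2]]].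
have hi : a = i by apply: val_inj.
subst a.
have := Hmax (i, b); rewrite /P /= in_diagE h1 h2 /=; lia.
Qed.

Lemma pat n (pi : 'S_n) (k1 k2 i r : 'I_n) : k1 < k2 -> k2 < i -> i < r ->
  pi k1 < pi r -> pi k2 < pi r -> pi r < pi i ->
  contains_pattern pi [:: 1; 2; 4; 3] \/ contains_pattern pi [:: 2; 1; 4; 3].
Proof.
move=> h1 h2 h3 h4 h5 h6.
case: (ltngtP (pi k1) (pi k2)) => h7; [left|right|].
- exists (fun x : 'I_4 => nth k1 [:: k1; k2; i; r] x); split;
  move=> [[|[|[|[|?]]]] ?] [[|[|[|[|?]]]] ?] //=; lia.
- exists (fun x : 'I_4 => nth k1 [:: k1; k2; i; r] x); split;
  move=> [[|[|[|[|?]]]] ?] [[|[|[|[|?]]]] ?] //=; lia.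
- have /perm_inj E : pi k1 = pi k2 by apply: val_inj.
  by rewrite E ltnn in h1.
Qed.

Lemma contra_pat n (pi : 'S_n) (tau : seq nat) :
  size tau = 4 ->
  nth 0 tau 0 < nth 0 tau 3 -> nth 0 tau 1 < nth 0 tau 3 -> nth 0 tau 3 < nth 0 tau 2 ->
  contains_pattern pi tau ->
  exists i j, essential pi i j && (1 < rank_sq pi i j).
Proof.
move=> sz t03 t13 t32 [f [Hinc Hval]].
have o0 : 0 < size tau by rewrite sz.
have o1 : 1 < size tau by rewrite sz.
have o2 : 2 < size tau by rewrite sz.
have o3 : 3 < size tau by rewrite sz.
pose a := f (Ordinal o0); pose b := f (Ordinal o1).
pose c := f (Ordinal o2); pose d := f (Ordinal o3).
have ab : a < b by apply: Hinc.
have bc : b < c by apply: Hinc.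
have cd : c < d by apply: Hinc.
have ad : pi a < pi d by rewrite /a /d Hval.
have bd : pi b < pi d by rewrite /b /d Hval.
have dc : pi d < pi c by rewrite /c /d Hval.
have K := @key n pi c d cd dc. apply: K. apply/card_gt1P; exists a, b; rewrite !inE; split.
- apply/andP; split=> //; lia.
- apply/andP; split=> //; lia.
- by apply/negP => /eqP E; rewrite E ltnn in ab.
Qed.

Theorem theorem2p1 (n : nat) (pi : 'S_n) :
  schroeder pi <-> (forall i j : 'I_n, essential pi i j -> rank_sq pi i j <= 1).
Proof.
split.
  move=> [A1 A2] i j /and3P [D _ _]; rewrite leqNgt; apply/negP => rk.
  move: D; rewrite in_diagE => /andP [h1 h2].
  have hr : pi ((pi^-1)%g j) = j by rewrite permKV.
  have main : forall x y : 'I_n, x \in [set k : 'I_n | (k < i) && (pi k < j)] ->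
      y \in [set k : 'I_n | (k < i) && (pi k < j)] -> x < y -> False.
    move=> x y; rewrite !inE => /andP [x1 x2] /andP [y1 y2] xy.
    have := @pat n pi x y i ((pi^-1)%g j) xy y1 h2; rewrite hr.
    by move=> /(_ x2 y2 h1) [].
  move/card_gt1P: rk => [x [y [xS yS xy]]].
  case: (ltngtP x y) => h; first exact: main xS yS h.
    exact: main yS xS h.
  by move/val_inj: h => E; rewrite E eqxx in xy.
move=> H; split=> C.
  have [i [j /andP [E R]]] := @contra_pat n pi [:: 1; 2; 4; 3] (erefl 4) isT isT isT C.
  by have := H i j E; rewrite leqNgt R.
have [i [j /andP [E R]]] := @contra_pat n pi [:: 2; 1; 4; 3] (erefl 4) isT isT isT C.
by have := H i j E; rewrite leqNgt R.
Qed.
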